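(* Let $a_1>a_2>\cdots>a_n$ be real numbers in $[a,b]$ and $w_1,\dots,w_n$ real weights with \[ \sum_{i=1}^n w_i=\sum_{i=1}^n w_ia_i=\sum_{i=1}^n w_ia_i^2=0. \] For $1\le j\le n$ write $W_j=\sum_{i=1}^j w_i$, $M_j=\sum_{i=1}^j w_ia_i$, $Q_j=\sum_{i=1}^j w_ia_i^2$. Then $\sum_{i=1}^n w_if(a_i)\ge 0$ holds for every three times differentiable $f:[a,b]\to\mathbb{R}$ with $f'''\ge 0$ if and only if \[ W_jQ_j\ge M_j^2 \] for every $j\in\{1,\dots,n-1\}$ satisfying $W_j a_j\ge M_j\ge W_j a_{j+1}$. *)

(* Defs.v *)
From Stdlib Require Import Reals Lra Lia.
Open Scope R_scope.

Fixpoint sum1 (F : nat -> R) (j : nat) : R :=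
  match j with
  | O => 0
  | S k => sum1 F k + F (S k)
  end.

(* g is the derivative of f on the closed interval [a,b], as a function
   on [a,b]: at every x in [a,b], (f(x+h)-f(x))/h -> g x as h -> 0 with
   h <> 0 and x+h in [a,b] (one-sided at the endpoints). *)
Definition deriv_on (f g : R -> R) (a b : R) : Prop :=
  forall x, a <= x <= b ->
    limit1_in (fun h => (f (x + h) - f x) / h)
              (fun h => h <> 0 /\ a <= x + h <= b) (g x) 0.

(* Main.v *)
Require Import Defs.
From Stdlib Require Import Reals Lra Lia Psatz Classical.
From Coquelicot Require Import Coquelicot.
Open Scope R_scope.

Lemma lim_ext (f g : R -> R) D l x0 :
  (forall h, D h -> f h = g h) -> limit1_in f D l x0 -> limit1_in g D l x0.
Proof.
  intros E H eps He. destruct (H eps He) as [alp [Ha Hb]].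
  exists alp; split; auto. intros x [Dx Hx]. rewrite <- E; auto.
Qed.

Lemma lim_const (c : R) D x0 : limit1_in (fun _ => c) D c x0.
Proof. exact (limit_free (fun _ => c) D 0 x0). Qed.

Lemma lim_id D : limit1_in (fun h => h) D 0 0.
Proof.
  intros eps He. exists eps; split; auto. intros x [_ Hx]. exact Hx.
Qed.

Lemma lim_eq (f : R -> R) D l l' x0 : l = l' -> limit1_in f D l x0 -> limit1_in f D l' x0.
Proof. intros ->; auto. Qed.

Lemma deriv_on_lim f g a b : (forall x, derivable_pt_lim f x (g x)) -> deriv_on f g a b.
Proof.
  intros H x _ eps He. destruct (H x eps He) as [d Hd].
  exists d; split. apply (cond_pos d).
  intros h [[Hh _] Hd2]. simpl in *. unfold R_dist in *.
  replace (h - 0) with h in Hd2 by ring. apply Hd; auto.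
Qed.

Lemma deriv_on_plus f f' g g' a b : deriv_on f f' a b -> deriv_on g g' a b ->
  deriv_on (fun x => f x + g x) (fun x => f' x + g' x) a b.
Proof.
  intros Hf Hg x Hx. eapply lim_ext; [| apply limit_plus; [apply Hf|apply Hg]; auto].
  intros h _. simpl. unfold Rdiv. ring.
Qed.

Lemma deriv_on_mul f f' g g' a b : deriv_on f f' a b -> deriv_on g g' a b ->
  deriv_on (fun x => f x * g x) (fun x => f' x * g x + f x * g' x) a b.
Proof.
  intros Hf Hg x Hx.
  set (qf := fun h => (f (x + h) - f x) / h).
  set (qg := fun h => (g (x + h) - g x) / h).
  assert (L : limit1_in (fun h => (f x + h * qf h) * qg h + g x * qf h)
     (fun h => h <> 0 /\ a <= x + h <= b) ((f x + 0 * f' x) * g' x + g x * f' x) 0).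
  { apply limit_plus. apply limit_mul. apply limit_plus. apply lim_const.
    apply limit_mul. apply lim_id. apply Hf; auto. apply Hg; auto.
    apply limit_mul. apply lim_const. apply Hf; auto. }
  eapply lim_eq; [| eapply lim_ext; [| exact L]].
  ring. intros h [Hh _]. unfold qf, qg. field. auto.
Qed.

Lemma deriv_on_ext f f' g g' a b : (forall x, f x = g x) -> (forall x, f' x = g' x) ->
  deriv_on f f' a b -> deriv_on g g' a b.
Proof.
  intros E E' H x Hx. rewrite <- E'. eapply lim_ext; [|apply H; auto].
  intros h _. simpl. rewrite !E. auto.
Qed.

Lemma deriv_on_poly f g a b : (forall x, is_derive f x (g x)) -> deriv_on f g a b.
Proof. intros H. apply deriv_on_lim. intros x. apply is_derive_Reals. auto. Qed.

Lemma deriv_cont f f' a b x : deriv_on f f' a b -> a <= x <= b ->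
  forall eps, 0 < eps -> exists d, 0 < d /\
   forall y, a <= y <= b -> Rabs (y - x) < d -> Rabs (f y - f x) < eps.
Proof.
  intros H Hx eps He. destruct (H x Hx 1 Rlt_0_1) as [alp [Ha Hb]].
  set (K := Rabs (f' x) + 1).
  assert (HK : 0 < K) by (unfold K; pose proof (Rabs_pos (f' x)); lra).
  exists (Rmin alp (eps / K)). split. apply Rmin_glb_lt; auto. apply Rdiv_lt_0_compat; auto.
  intros y Hy Hd.
  destruct (Req_dec y x) as [->|Hne]. rewrite Rminus_diag, Rabs_R0; auto.
  assert (Hq := Hb (y - x)). simpl in Hq. unfold R_dist in Hq.
  replace (x + (y - x)) with y in Hq by ring. replace (y - x - 0) with (y - x) in Hq by ring.
  assert (Hd1 : Rabs (y - x) < alp) by (eapply Rlt_le_trans; [exact Hd| apply Rmin_l]).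
  assert (Hd2 : Rabs (y - x) < eps / K) by (eapply Rlt_le_trans; [exact Hd| apply Rmin_r]).
  assert (Hyx : y - x <> 0) by lra.
  specialize (Hq (conj (conj Hyx Hy) Hd1)).
  assert (E : f y - f x = (y - x) * ((f y - f x) / (y - x))) by (field; auto).
  rewrite E, Rabs_mult.
  assert (Rabs ((f y - f x) / (y - x)) <= K).
  { unfold K. replace ((f y - f x) / (y - x)) with (((f y - f x) / (y - x) - f' x) + f' x) by ring.
    eapply Rle_trans. apply Rabs_triang. lra. }
  apply Rlt_le_trans with (eps / K * K).
  2: { right. field. lra. }
  pose proof (Rabs_pos (y - x)). pose proof (Rabs_pos ((f y - f x) / (y - x))). nra.
Qed.

Definition clamp p r x := Rmax p (Rmin r x).

Lemma clamp_in p r x : p <= r -> p <= clamp p r x <= r.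
Proof. intros. unfold clamp, Rmax, Rmin. repeat destruct Rle_dec; lra. Qed.

Lemma clamp_id p r x : p <= x <= r -> clamp p r x = x.
Proof. intros. unfold clamp, Rmax, Rmin. repeat destruct Rle_dec; lra. Qed.

Lemma clamp_lip p r x y : p <= r -> p <= x <= r -> Rabs (clamp p r y - x) <= Rabs (y - x).
Proof. intros. unfold clamp, Rmax, Rmin. repeat destruct Rle_dec; unfold Rabs; repeat destruct Rcase_abs; lra. Qed.

Lemma mono_deriv (phi phi' : R -> R) a b p r : deriv_on phi phi' a b ->
  a <= p -> p <= r -> r <= b -> (forall t, p <= t <= r -> 0 <= phi' t) -> phi p <= phi r.
Proof.
  intros H Hap Hpr Hrb Hpos.
  destruct (Req_dec p r) as [->|Hne]; [lra|]. assert (Hlt : p < r) by lra.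
  set (psi := fun x => phi (clamp p r x)).
  assert (Dlim : forall c, p < c < r -> derivable_pt_lim psi c (phi' c)).
  { intros c Hc eps He.
    destruct (H c ltac:(lra) eps He) as [alp [Ha Hb]].
    assert (Hd : 0 < Rmin alp (Rmin (c - p) (r - c))).
    { apply Rmin_glb_lt; auto. apply Rmin_glb_lt; lra. }
    exists (mkposreal _ Hd). intros h Hh Hhd. simpl in Hhd.
    assert (h1 : Rabs h < alp) by (eapply Rlt_le_trans; [exact Hhd| apply Rmin_l]).
    assert (h2 : Rabs h < Rmin (c - p) (r - c)) by (eapply Rlt_le_trans; [exact Hhd| apply Rmin_r]).
    assert (h3 : Rabs h < c - p) by (eapply Rlt_le_trans; [exact h2| apply Rmin_l]).
    assert (h4 : Rabs h < r - c) by (eapply Rlt_le_trans; [exact h2| apply Rmin_r]).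
    assert (Hb2 : p < c + h < r) by (unfold Rabs in *; destruct Rcase_abs; lra).
    unfold psi. rewrite !clamp_id by lra.
    assert (Q := Hb h). simpl in Q. unfold R_dist in Q. replace (h - 0) with h in Q by ring.
    apply Q. split; auto. split; auto. lra. }
  assert (pr1 : forall c, p < c < r -> derivable_pt psi c).
  { intros c Hc. exists (phi' c). apply Dlim; auto. }
  assert (pr2 : forall c, p < c < r -> derivable_pt id c).
  { intros c _. apply derivable_pt_id. }
  assert (Hc1 : forall c, p <= c <= r -> continuity_pt psi c).
  { intros c Hc eps He.
    destruct (deriv_cont phi phi' a b c H ltac:(lra) eps He) as [d [Hd Hd2]].
    exists d; split; auto. intros y [_ Hy]. simpl in *. unfold R_dist in *.
    unfold psi. rewrite (clamp_id p r c) by lra.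
    apply Hd2. pose proof (clamp_in p r y Hpr). lra.
    eapply Rle_lt_trans. apply clamp_lip; lra. auto. }
  assert (Hc2 : forall c, p <= c <= r -> continuity_pt id c).
  { intros c _. apply derivable_continuous_pt, derivable_pt_id. }
  destruct (MVT psi id p r pr1 pr2 Hlt Hc1 Hc2) as [c [P E]].
  rewrite (derive_pt_eq_0 psi c (phi' c) (pr1 c P) (Dlim c P)) in E.
  rewrite (derive_pt_eq_0 id c 1 (pr2 c P)) in E.
  2: { apply derivable_pt_lim_id. }
  unfold psi, id in E. rewrite !clamp_id in E by lra.
  assert (0 <= phi' c) by (apply Hpos; lra). nra.
Qed.

Definition phiF (f f1 f2 : R -> R) (Q M W : R) (x : R) :=
  (Q - 2 * x * M + x ^ 2 * W) * f2 x + (2 * (M - x * W)) * f1 x + (2 * W) * f x.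

Lemma key_mono f f1 f2 f3 a b p r Q M W :
  deriv_on f f1 a b -> deriv_on f1 f2 a b -> deriv_on f2 f3 a b ->
  a <= p -> p <= r -> r <= b -> (forall t, a <= t <= b -> 0 <= f3 t) ->
  (forall t, p <= t <= r -> 0 <= Q - 2 * t * M + t ^ 2 * W) ->
  phiF f f1 f2 Q M W p <= phiF f f1 f2 Q M W r.
Proof.
  intros D1 D2 D3 Hap Hpr Hrb H3 HG.
  assert (Du1 : deriv_on (fun x => Q - 2 * x * M + x ^ 2 * W) (fun x => 2 * x * W - 2 * M) a b).
  { apply deriv_on_poly. intros x. auto_derive; auto. ring. }
  assert (Du2 : deriv_on (fun x => 2 * (M - x * W)) (fun x => - 2 * W) a b).
  { apply deriv_on_poly. intros x. auto_derive; auto. ring. }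
  assert (Du3 : deriv_on (fun x => 2 * W) (fun x => 0) a b).
  { apply deriv_on_poly. intros x. auto_derive; auto. }
  pose proof (deriv_on_plus _ _ _ _ a b (deriv_on_plus _ _ _ _ a b
     (deriv_on_mul _ _ _ _ a b Du1 D3) (deriv_on_mul _ _ _ _ a b Du2 D2))
     (deriv_on_mul _ _ _ _ a b Du3 D1)) as D.
  pose proof (mono_deriv _ _ a b p r D Hap Hpr Hrb) as M0. cbv beta in M0. unfold phiF. apply M0.
  intros t Ht.
  replace ((2 * t * W - 2 * M) * f2 t + (Q - 2 * t * M + t ^ 2 * W) * f3 t +
    (-2 * W * f1 t + 2 * (M - t * W) * f2 t) + (0 * f t + 2 * W * f1 t))
   with ((Q - 2 * t * M + t ^ 2 * W) * f3 t) by ring.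
  apply Rmult_le_pos. apply HG; auto. apply H3; lra.
Qed.

Definition gq Q M W x := Q - 2 * x * M + x ^ 2 * W.

Lemma qpos Q M W x : W > 0 -> W * Q >= M ^ 2 -> gq Q M W x >= 0.
Proof.
  intros HW HQ. unfold gq.
  assert (W * (Q - 2 * x * M + x ^ 2 * W) = (x * W - M) ^ 2 + (W * Q - M ^ 2)) by ring.
  assert (0 <= (x*W - M)^2) by apply pow2_ge_0. nra.
Qed.

Lemma gdiff Q M W x y : gq Q M W y - gq Q M W x = (y - x) * (W * (y + x) - 2 * M).
Proof. unfold gq. ring. Qed.

Lemma qA Q M W p r : p < r -> (W * r >= M /\ M >= W * p -> W * Q >= M ^ 2) ->
  gq Q M W r > gq Q M W p -> M - p * W >= 0 -> gq Q M W p >= 0.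
Proof.
  intros Hpr C Hg Hs. pose proof (gdiff Q M W p r) as E.
  assert (HW : W > 0).
  { destruct (Rle_lt_dec W 0) as [h|h]; [|lra].
    assert ((r - p) * (W * (r + p) - 2 * M) <= 0); [|lra].
    assert (W * (r + p) - 2 * M <= 0) by nra. nra. }
  destruct (Rge_dec (W * r) M) as [h|h].
  - apply qpos; auto. apply C. split; lra.
  - exfalso. assert (W * (r + p) - 2 * M < 0) by nra. nra.
Qed.

Lemma qB Q M W p r : p < r -> (W * r >= M /\ M >= W * p -> W * Q >= M ^ 2) ->
  gq Q M W p >= gq Q M W r -> M - r * W < 0 -> gq Q M W r >= 0.
Proof.
  intros Hpr C Hg Hs. pose proof (gdiff Q M W p r) as E.
  assert (HW : W > 0).
  { destruct (Rle_lt_dec W 0) as [h|h]; [|lra].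
    assert (W * (r + p) - 2 * M > 0) by nra. nra. }
  destruct (Rge_dec M (W * p)) as [h|h].
  - apply qpos; auto. apply C. split; lra.
  - exfalso. assert (W * (r + p) - 2 * M > 0) by nra. nra.
Qed.

Lemma qD Q M W p r x : p < r -> (W * r >= M /\ M >= W * p -> W * Q >= M ^ 2) ->
  gq Q M W p >= 0 -> gq Q M W r >= 0 -> p <= x <= r -> gq Q M W x >= 0.
Proof.
  intros Hpr C Hp Hr Hx.
  destruct (Rle_lt_dec W 0) as [h|h].
  - assert (E : (r - p) * gq Q M W x = (r - x) * gq Q M W p + (x - p) * gq Q M W r
        - W * (x - p) * (r - x) * (r - p)) by (unfold gq; ring).
    assert (0 <= (r - x) * gq Q M W p) by nra.
    assert (0 <= (x - p) * gq Q M W r) by nra.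
    assert (0 <= - W * (x - p) * (r - x)) by (apply Rmult_le_pos; [nra|lra]).
    nra.
  - destruct (Rge_dec (W * r) M) as [h1|h1]; destruct (Rge_dec M (W * p)) as [h2|h2].
    + apply qpos; auto.
    + pose proof (gdiff Q M W p x). assert (W * (x + p) - 2 * M >= 0) by nra. nra.
    + pose proof (gdiff Q M W x r). assert (W * (r + x) - 2 * M <= 0) by nra. nra.
    + nra.
Qed.

Lemma choose_window Q M W p r : p < r -> W > 0 -> W * r >= M -> M >= W * p ->
  M ^ 2 > W * Q -> exists m d, 0 < d /\ p < m - d /\ m + d < r /\
  6 * gq Q M W m + d ^ 2 * W < 0.
Proof.
  intros Hpr HW H1 H2 HD.
  set (t := M / W). set (L := r - p). set (D := M ^ 2 - W * Q).
  assert (Ht1 : p <= t) by (unfold t; apply Rmult_le_reg_r with W; auto; field_simplify; lra).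
  assert (Ht2 : t <= r) by (unfold t; apply Rmult_le_reg_r with W; auto; field_simplify; lra).
  assert (HL : 0 < L) by (unfold L; lra). assert (HDp : 0 < D) by (unfold D; lra).
  assert (HK : 0 < W * W * L * L) by (repeat apply Rmult_lt_0_compat; auto).
  set (th := Rmin 1 (D / (W * W * L * L))).
  assert (Hth0 : 0 < th) by (apply Rmin_glb_lt; [lra| apply Rdiv_lt_0_compat; auto]).
  assert (Hth1 : th <= 1) by apply Rmin_l.
  assert (Hth2 : th * (W * W * L * L) <= D).
  { assert (th <= D / (W * W * L * L)) by apply Rmin_r.
    apply Rmult_le_compat_r with (r := W * W * L * L) in H; [|lra].
    replace (D / (W * W * L * L) * (W * W * L * L)) with D in H by (field; lra). lra. }
  set (c := (p + r) / 2).
  exists (t + th * (c - t)), (th * L / 4).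
  assert (Hu : (th * (c - t)) ^ 2 <= th ^ 2 * L ^ 2 / 4).
  { assert (Rabs (c - t) <= L / 2) by (unfold c, L, Rabs; destruct Rcase_abs; lra).
    assert ((c - t) ^ 2 <= (L / 2) ^ 2).
    { rewrite <- (pow2_abs (c - t)). apply pow_incr. split; auto. apply Rabs_pos. }
    replace ((th * (c - t)) ^ 2) with (th ^ 2 * (c - t) ^ 2) by ring.
    replace (th ^ 2 * L ^ 2 / 4) with (th ^ 2 * (L / 2) ^ 2) by field.
    apply Rmult_le_compat_l; auto. apply pow2_ge_0. }
  assert (Eg : W * gq Q M W (t + th * (c - t)) = W ^ 2 * (th * (c - t)) ^ 2 - D).
  { unfold gq, D, t. field. lra. }
  split; [|split; [|split]].
  - apply Rmult_lt_0_compat; [apply Rmult_lt_0_compat|]; lra.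
  - unfold c, L in *. nra.
  - unfold c, L in *. nra.
  - apply Rmult_lt_reg_l with W; auto. rewrite Rmult_0_r.
    replace (W * (6 * gq Q M W (t + th * (c - t)) + (th * L / 4) ^ 2 * W))
      with (6 * (W * gq Q M W (t + th * (c - t))) + th ^ 2 * (W * W * L * L) / 16) by field.
    rewrite Eg.
    assert (th ^ 2 * (W * W * L * L) <= D).
    { replace (th ^ 2 * (W * W * L * L)) with (th * (th * (W * W * L * L))) by ring.
      assert (th * (th * (W * W * L * L)) <= 1 * D).
      { apply Rmult_le_compat; try lra. nra. }
      lra. }
    assert (W ^ 2 * (th * (c - t)) ^ 2 <= th ^ 2 * (W * W * L * L) / 4).
    { replace (th ^ 2 * (W * W * L * L) / 4) with (W ^ 2 * (th ^ 2 * L ^ 2 / 4)) by field.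
      apply Rmult_le_compat_l; auto. apply pow2_ge_0. }
    lra.
Qed.

Definition pp c k x := if Rle_dec x c then 0 else (x - c) ^ k.

Lemma pow_le1 x k : 0 <= x <= 1 -> x ^ k <= 1.
Proof.
  intros H. induction k; simpl. lra.
  assert (0 <= x ^ k) by (apply pow_le; lra). nra.
Qed.

Lemma pp_deriv c k x : derivable_pt_lim (pp c (S (S k))) x (INR (S (S k)) * pp c (S k) x).
Proof.
  destruct (total_order_T x c) as [[Hlt|Heq]|Hgt].
  - intros eps He. assert (Hd : 0 < c - x) by lra. exists (mkposreal _ Hd).
    intros h Hh Hhd. simpl in Hhd. unfold pp.
    destruct (Rle_dec x c); [|lra]. destruct (Rle_dec (x + h) c).
    2: { unfold Rabs in Hhd; destruct Rcase_abs in Hhd; lra. }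
    replace ((0 - 0) / h - INR (S (S k)) * 0) with 0 by (field; auto).
    rewrite Rabs_R0; auto.
  - subst x. intros eps He. assert (Hd : 0 < Rmin 1 eps) by (apply Rmin_glb_lt; lra).
    exists (mkposreal _ Hd). intros h Hh Hhd. simpl in Hhd.
    assert (H1 : Rabs h <= 1) by (left; eapply Rlt_le_trans; [exact Hhd|apply Rmin_l]).
    assert (H2 : Rabs h < eps) by (eapply Rlt_le_trans; [exact Hhd|apply Rmin_r]).
    unfold pp. destruct (Rle_dec c c); [|lra].
    destruct (Rle_dec (c + h) c).
    + replace ((0 - 0) / h - INR (S (S k)) * 0) with 0 by (field; auto).
      rewrite Rabs_R0; auto.
    + replace (c + h - c) with h by ring. replace (h ^ S (S k) - 0) with (h * h ^ S k) by (rewrite tech_pow_Rmult; ring).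
      replace (h * h ^ S k / h - INR (S (S k)) * 0) with (h ^ S k) by (field; auto).
      rewrite <- RPow_abs. simpl. 
      assert (Rabs h ^ k <= 1) by (apply pow_le1; split; [apply Rabs_pos|auto]).
      assert (0 <= Rabs h) by apply Rabs_pos. nra.
  - assert (D : derivable_pt_lim (fun y => (y - c) ^ S (S k)) x
                (INR (S (S k)) * (x - c) ^ S k)).
    { apply is_derive_Reals. auto_derive; auto. change (match k with 0%nat => 1 | S _ => INR k + 1 end) with (INR (S k)). rewrite (S_INR (S k)), <- tech_pow_Rmult. unfold Rminus. ring. }
    intros eps He. destruct (D eps He) as [d0 Hd0].
    assert (Hd : 0 < Rmin d0 (x - c)) by (apply Rmin_glb_lt; [apply cond_pos|lra]).
    exists (mkposreal _ Hd). intros h Hh Hhd. simpl in Hhd.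
    assert (H1 : Rabs h < d0) by (eapply Rlt_le_trans; [exact Hhd|apply Rmin_l]).
    assert (H2 : Rabs h < x - c) by (eapply Rlt_le_trans; [exact Hhd|apply Rmin_r]).
    unfold pp. destruct (Rle_dec x c); [lra|]. destruct (Rle_dec (x + h) c).
    { unfold Rabs in H2; destruct Rcase_abs in H2; lra. }
    apply Hd0; auto.
Qed.

Definition H3 l m r k x := pp l k x - 2 * pp m k x + pp r k x.

Lemma H3_deriv l m r k a b :
  deriv_on (H3 l m r (S (S k))) (fun x => INR (S (S k)) * H3 l m r (S k) x) a b.
Proof.
  apply deriv_on_lim. intros x. unfold H3.
  replace (INR (S (S k)) * (pp l (S k) x - 2 * pp m (S k) x + pp r (S k) x)) with
   (INR (S (S k)) * pp l (S k) x - 2 * (INR (S (S k)) * pp m (S k) x) + INR (S (S k)) * pp r (S k) x) by ring.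
  apply derivable_pt_lim_plus. apply derivable_pt_lim_minus. apply pp_deriv.
  apply derivable_pt_lim_scal with (f := pp m (S (S k))). apply pp_deriv. apply pp_deriv.
Qed.

Lemma deriv_on_scal c u u' a b : deriv_on u u' a b -> deriv_on (fun x => c * u x) (fun x => c * u' x) a b.
Proof.
  intros H. eapply deriv_on_ext; [| |apply deriv_on_mul with (f := fun _ => c) (f' := fun _ => 0); [|exact H]].
  intros; simpl; auto. intros; simpl; ring.
  apply deriv_on_poly. intros; auto_derive; auto.
Qed.

Lemma H3_1_nonneg l m r x : l < m -> m - l = r - m -> 0 <= H3 l m r 1 x.
Proof.
  intros. unfold H3, pp. repeat destruct Rle_dec; simpl; lra.
Qed.

Lemma H3_4_right m d x : 0 < d -> m + d <= x ->
  H3 (m - d) m (m + d) 4 x = 12 * d ^ 2 * (x - m) ^ 2 + 2 * d ^ 4.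
Proof.
  intros Hd Hx. unfold H3, pp.
  destruct (Rle_dec x (m - d)); [lra|]. destruct (Rle_dec x m); [lra|].
  destruct (Rle_dec x (m + d)).
  - assert (x = m + d) by lra. subst x. ring.
  - ring.
Qed.

Lemma H3_4_left l m r x : l < m < r -> x <= l -> H3 l m r 4 x = 0.
Proof.
  intros H Hx. unfold H3, pp.
  destruct (Rle_dec x l); [|lra]. destruct (Rle_dec x m); [|lra].
  destruct (Rle_dec x r); [|lra]. ring.
Qed.

Lemma sum1_nonneg F m : (forall i, (1 <= i <= m)%nat -> 0 <= F i) -> 0 <= sum1 F m.
Proof.
  induction m; intros H; simpl. lra.
  assert (0 <= sum1 F m) by (apply IHm; intros; apply H; lia).
  assert (0 <= F (S m)) by (apply H; lia). lra.
Qed.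

Lemma sum1_ext F G m : (forall i, (1 <= i <= m)%nat -> F i = G i) -> sum1 F m = sum1 G m.
Proof.
  induction m; intros H; simpl. auto.
  rewrite IHm by (intros; apply H; lia). rewrite H by lia. auto.
Qed.

Lemma sum1_tail F j m : (j <= m)%nat -> (forall i, (j < i <= m)%nat -> F i = 0) -> sum1 F m = sum1 F j.
Proof.
  induction m; intros Hj H.
  - assert (j = 0%nat) by lia. subst. auto.
  - destruct (Nat.eq_dec j (S m)) as [->|Hne]; auto.
    simpl. rewrite IHm by (try lia; intros; apply H; lia). rewrite H by lia. ring.
Qed.

Lemma pt_mono (pt : nat -> R) n : (forall i, (1 <= i < n)%nat -> pt (S i) < pt i) ->
  forall i k, (1 <= i <= k)%nat -> (k <= n)%nat -> pt k <= pt i.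
Proof.
  intros Hd i k Hik Hkn. induction k.
  - lia.
  - destruct (Nat.eq_dec i (S k)) as [->|Hne]. lra.
    assert (pt (S k) < pt k) by (apply Hd; lia).
    assert (pt k <= pt i) by (apply IHk; lia). lra.
Qed.

Lemma argmin (e : nat -> R) n : (1 <= n)%nat -> exists k, (1 <= k <= n)%nat /\
  (forall i, (1 <= i <= n)%nat -> e k <= e i) /\ (forall i, (1 <= i < k)%nat -> e k < e i).
Proof.
  induction n; intros Hn. lia.
  destruct (Nat.eq_dec n 0) as [->|Hne].
  - exists 1%nat. split; [lia|split]; intros i Hi. assert (i = 1%nat) by lia. subst; lra. lia.
  - destruct IHn as [k [Hk [H1 H2]]]; [lia|].
    destruct (Rlt_le_dec (e (S n)) (e k)) as [h|h].
    + exists (S n). split; [lia|split].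
      * intros i Hi. destruct (Nat.eq_dec i (S n)) as [->|]; [lra|].
        assert (e k <= e i) by (apply H1; lia). lra.
      * intros i Hi. assert (e k <= e i) by (apply H1; lia). lra.
    + exists k. split; [lia|split]; auto.
      intros i Hi. destruct (Nat.eq_dec i (S n)) as [->|]; auto. apply H1; lia.
Qed.

Lemma sum_quad (w pt : nat -> R) A B m j :
  sum1 (fun i => w i * (A * (pt i - m) ^ 2 + B)) j =
  A * gq (sum1 (fun i => w i * pt i ^ 2) j) (sum1 (fun i => w i * pt i) j) (sum1 w j) m + B * sum1 w j.
Proof. induction j. simpl; unfold gq; ring. cbn [sum1]. rewrite IHj. unfold gq. ring. Qed.

Theorem mainTheorem3 (a b : R) (n : nat) (pt w : nat -> R)
  (Hdec : forall i, (1 <= i < n)%nat -> pt (S i) < pt i)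
  (Hin : forall i, (1 <= i <= n)%nat -> a <= pt i <= b)
  (HW : sum1 w n = 0)
  (HM : sum1 (fun i => w i * pt i) n = 0)
  (HQ : sum1 (fun i => w i * pt i ^ 2) n = 0) :
  (forall f f1 f2 f3 : R -> R,
      deriv_on f f1 a b -> deriv_on f1 f2 a b -> deriv_on f2 f3 a b ->
      (forall t, a <= t <= b -> 0 <= f3 t) ->
      0 <= sum1 (fun i => w i * f (pt i)) n)
  <->
  (forall j : nat, (1 <= j <= n - 1)%nat ->
      sum1 w j * pt j >= sum1 (fun i => w i * pt i) j /\
      sum1 (fun i => w i * pt i) j >= sum1 w j * pt (S j) ->
      sum1 w j * sum1 (fun i => w i * pt i ^ 2) j >= (sum1 (fun i => w i * pt i) j) ^ 2).
Proof.
  split.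
  - intros HL j Hj [C1 C2].
    set (W := sum1 w j) in *. set (M := sum1 (fun i => w i * pt i) j) in *.
    set (Q := sum1 (fun i => w i * pt i ^ 2) j) in *.
    assert (Hpr : pt (S j) < pt j) by (apply Hdec; lia).
    assert (HW0 : 0 <= W) by nra.
    destruct (Rge_dec (W * Q) (M ^ 2)) as [h|h]; auto. exfalso.
    destruct (Req_dec W 0) as [HW1|HW1].
    { assert (M = 0) by (rewrite HW1 in *; lra). rewrite HW1, H in h. lra. }
    destruct (choose_window Q M W (pt (S j)) (pt j) Hpr ltac:(lra) C1 C2 ltac:(lra))
      as [m [d [Hd [Hl [Hr Hneg]]]]].
    assert (T := HL (H3 (m - d) m (m + d) 4)
      (fun x => INR 4 * H3 (m - d) m (m + d) 3 x)
      (fun x => INR 4 * (INR 3 * H3 (m - d) m (m + d) 2 x))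
      (fun x => INR 4 * (INR 3 * (INR 2 * H3 (m - d) m (m + d) 1 x)))
      (H3_deriv _ _ _ 2 a b)
      (deriv_on_scal _ _ _ a b (H3_deriv _ _ _ 1 a b))
      (deriv_on_scal _ _ _ a b (deriv_on_scal _ _ _ a b (H3_deriv _ _ _ 0 a b)))).
    assert (T2 : 0 <= sum1 (fun i => w i * H3 (m - d) m (m + d) 4 (pt i)) n).
    { apply T. intros t _. pose proof (H3_1_nonneg (m - d) m (m + d) t ltac:(lra) ltac:(lra)).
      simpl INR. nra. }
    rewrite (sum1_tail _ j n) in T2 by (try lia; intros i Hi;
      rewrite H3_4_left by (try lra; assert (pt i <= pt (S j)) by (apply (pt_mono pt n Hdec); lia); lra);
      ring).
    rewrite (sum1_ext _ (fun i => w i * (12 * d ^ 2 * (pt i - m) ^ 2 + 2 * d ^ 4))) in T2.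
    2: { intros i Hi. rewrite H3_4_right; auto.
         assert (pt j <= pt i) by (apply (pt_mono pt n Hdec); lia). lra. }
    rewrite sum_quad in T2. fold W M Q in T2.
    assert (0 < d ^ 2) by (apply pow_lt; lra). nra.
  - intros HR f f1 f2 f3 D1 D2 D3 Hf3.
    destruct n as [|n']. { simpl. lra. }
    set (Wj := fun j => sum1 w j). set (Mj := fun j => sum1 (fun i => w i * pt i) j).
    set (Qj := fun j => sum1 (fun i => w i * pt i ^ 2) j).
    set (e := fun k => gq (Qj k) (Mj k) (Wj k) (pt k)).
    assert (gstep : forall k, gq (Qj (S k)) (Mj (S k)) (Wj (S k)) (pt (S k)) =
                             gq (Qj k) (Mj k) (Wj k) (pt (S k))).
    { intros k. unfold gq, Qj, Mj, Wj. simpl. ring. }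
    assert (sstep : forall k, Mj (S k) - pt (S k) * Wj (S k) = Mj k - pt (S k) * Wj k).
    { intros k. unfold Qj, Mj, Wj. simpl. ring. }
    assert (Cond : forall j, (1 <= j <= n')%nat -> 
       Wj j * pt j >= Mj j /\ Mj j >= Wj j * pt (S j) -> Wj j * Qj j >= Mj j ^ 2).
    { intros j Hj. apply HR. lia. }
    assert (Enn : forall k, (1 <= k <= S n')%nat -> e k >= 0).
    { destruct (argmin e (S n') ltac:(lia)) as [k0 [Hk0 [Hmin Hfirst]]].
      destruct (Rge_dec (e k0) 0) as [h|h].
      { intros k Hk. specialize (Hmin k Hk). lra. }
      exfalso.
      assert (e1 : e 1%nat = 0) by (unfold e, gq, Qj, Mj, Wj; simpl; ring).
      assert (en : e (S n') = 0) by (unfold e, gq, Qj, Mj, Wj; rewrite HW, HM, HQ; ring).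
      destruct k0 as [|k1]; [lia|].
      destruct (Nat.eq_dec k1 0) as [->|Hk1]; [lra|].
      destruct (Nat.eq_dec k1 n') as [->|Hk2]; [lra|].
      destruct (Rge_dec (Mj (S k1) - pt (S k1) * Wj (S k1)) 0) as [s|s].
      + assert (G := qA (Qj k1) (Mj k1) (Wj k1) (pt (S k1)) (pt k1)
           ltac:(apply Hdec; lia) ltac:(apply Cond; lia)).
        rewrite <- gstep in G. fold (e (S k1)) in G. fold (e k1) in G.
        assert (e (S k1) < e k1) by (apply Hfirst; lia).
        rewrite sstep in s. specialize (G ltac:(lra) s). lra.
      + assert (G := qB (Qj (S k1)) (Mj (S k1)) (Wj (S k1)) (pt (S (S k1))) (pt (S k1))
           ltac:(apply Hdec; lia) ltac:(apply Cond; lia)).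
        rewrite <- (gstep (S k1)) in G. fold (e (S (S k1))) in G. fold (e (S k1)) in G.
        assert (e (S k1) <= e (S (S k1))) by (apply Hmin; lia).
        specialize (G ltac:(lra) ltac:(lra)). lra. }
    assert (Piece : forall j x, (1 <= j <= n')%nat -> pt (S j) <= x <= pt j ->
        0 <= Qj j - 2 * x * Mj j + x ^ 2 * Wj j).
    { intros j x Hj Hx.
      assert (G := qD (Qj j) (Mj j) (Wj j) (pt (S j)) (pt j) x
           ltac:(apply Hdec; lia) ltac:(apply Cond; lia)).
      rewrite <- gstep in G. fold (e (S j)) in G. fold (e j) in G.
      unfold gq in G. apply Rge_le. apply G; auto; apply Enn; lia. }
    set (phi := fun j x => phiF f f1 f2 (Qj j) (Mj j) (Wj j) x).
    set (L := fun m => sum1 (fun i => w i * f (pt i)) m).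
    assert (Tel : forall m, sum1 (fun j => phi j (pt j) - phi j (pt (S j))) m
                    = 2 * L m - phi m (pt (S m))).
    { induction m.
      - unfold phi, L, phiF, Qj, Mj, Wj. simpl. ring.
      - simpl sum1 at 1. rewrite IHm. unfold phi, L, phiF, Qj, Mj, Wj. simpl. ring. }
    assert (Tn : 2 * L (S n') = sum1 (fun j => phi j (pt j) - phi j (pt (S j))) n').
    { rewrite Tel. assert (phi (S n') (pt (S n')) = 0).
      { unfold phi, phiF, Qj, Mj, Wj. rewrite HW, HM, HQ. ring. }
      unfold L in *. revert H. unfold phi, L, phiF, Qj, Mj, Wj. simpl. intros H. lra. }
    assert (0 <= sum1 (fun j => phi j (pt j) - phi j (pt (S j))) n').
    { apply sum1_nonneg. intros j Hj.
      assert (phi j (pt (S j)) <= phi j (pt j)); [|lra].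
      unfold phi. apply (key_mono f f1 f2 f3 a b); auto;
        try (apply Hin; lia); try (left; apply Hdec; lia); try (intros t Ht; apply Piece; auto). }
    unfold L in *. lra.
Qed.
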